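(* Let $X$ be a real $n\times p$ matrix ($p<n$) of full rank with rows $x_1^\top,\dots,x_n^\top$, let $y\in\mathbb{R}^n$, $\sigma>0$, and $$\psi(g,b)=\sigma\|y-Xg-b\|_1+\tfrac12\|b\|_2^2,\qquad (g,b)\in\mathbb{R}^p\times\mathbb{R}^n.$$ Then: (i) $(\hat g,\hat b)$ minimizes $\psi$ if and only if $X^\top\hat b=0$ and, for every $i\in\{1,\dots,n\}$, $$\hat b_i=\begin{cases}\sigma,&\text{if } y_i-x_i^\top\hat g>\sigma,\\ y_i-x_i^\top\hat g,&\text{if } y_i-x_i^\top\hat g\in[-\sigma,\sigma],\\ -\sigma,&\text{if } y_i-x_i^\top\hat g<-\sigma;\end{cases}$$ in particular $\|\hat b\|_\infty\leq\sigma$ for any minimizer. (ii) The Lagrangian dual of the problem $\min\psi$ is $\gamma:=\max_{u\in\sigma P^*}\big(u^\top y-\tfrac12\|u\|_2^2\big)$, where $P^*=\{u\in\ker X^\top : \|u\|_\infty\leq 1\}$, and $\min_{(g,b)\in\mathbb{R}^p\times\mathbb{R}^n}\psi(g,b)=\gamma$. *)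

(* Defs.v *)
From mathcomp Require Import all_boot all_order all_algebra.
From mathcomp Require Import reals.
Set Implicit Arguments. Unset Strict Implicit. Unset Printing Implicit Defensive.
Import Order.TTheory GRing.Theory Num.Theory.
Local Open Scope ring_scope.

Section Defs.
Variables (R : realType) (n p : nat).

Definition norm1 (v : 'cV[R]_n) : R := \sum_(i < n) `|v i 0|.
Definition sqnorm2 (v : 'cV[R]_n) : R := \sum_(i < n) (v i 0) ^+ 2.
Definition dotv (u v : 'cV[R]_n) : R := \sum_(i < n) u i 0 * v i 0.

Definition psi (X : 'M[R]_(n, p)) (y : 'cV[R]_n) (sigma : R)
  (g : 'cV[R]_p) (b : 'cV[R]_n) : R :=
  sigma * norm1 (y - X *m g - b) + 2^-1 * sqnorm2 b.

Definition in_sigmaPstar (X : 'M[R]_(n, p)) (sigma : R) (u : 'cV[R]_n) : Prop :=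
  X^T *m u = 0 /\ forall i : 'I_n, `|u i 0| <= sigma.

Definition dual_obj (y : 'cV[R]_n) (u : 'cV[R]_n) : R :=
  dotv u y - 2^-1 * sqnorm2 u.

(* Lagrangian of  min sigma||r||_1 + 1/2||b||^2  s.t.  r = y - X g - b,
   with multiplier u for the equality constraint. *)
Definition lagrangian (X : 'M[R]_(n, p)) (y : 'cV[R]_n) (sigma : R)
  (g : 'cV[R]_p) (b r : 'cV[R]_n) (u : 'cV[R]_n) : R :=
  sigma * norm1 r + 2^-1 * sqnorm2 b + dotv u (y - X *m g - b - r).

End Defs.

(* Main.v *)
Require Import Defs.
From mathcomp Require Import all_boot all_order all_algebra.
From mathcomp Require Import reals.
From mathcomp Require Import ring lra.
From mathcomp Require boolp classical_sets topology normedtype derive.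
Import Order.TTheory GRing.Theory Num.Theory.
Local Open Scope ring_scope.

Section Pt.
Variable R : realType.
Implicit Types s t b u : R.

Definition clip s t : R := Num.max (- s) (Num.min s t).
Definition hub s t : R := clip s t * (t - clip s t / 2).

Lemma clipP s t : 0 < s ->
  [/\ s < t -> clip s t = s, - s <= t <= s -> clip s t = t & t < - s -> clip s t = - s].
Proof.
rewrite /clip => s0; split.
- move=> st; rewrite (min_l (ltW st)) max_r //; lra.
- move=> /andP[h1 h2]; rewrite (min_r h2) max_r //.
- move=> ts; rewrite min_r; last lra.
  rewrite max_l //; exact: ltW.
Qed.

Lemma clip_cases s t : 0 < s ->
  [\/ s < t /\ clip s t = s, (- s <= t <= s) /\ clip s t = t | t < - s /\ clip s t = - s].
Proof.
move=> s0; have [h1 h2 h3] := clipP s t s0.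
have [st|ts] := ltP s t; first by apply: Or31; split => //; exact: h1.
have [ts'|st'] := ltP t (- s); first by apply: Or33; split => //; exact: h3.
have H : - s <= t <= s by apply/andP.
by apply: Or32; split => //; exact: h2.
Qed.

Lemma clip_norm s t : 0 < s -> `|clip s t| <= s.
Proof.
move=> s0; case: (clip_cases s t s0) => [[_ ->]|[/andP[h1 h2] ->]|[_ ->]].
- by rewrite gtr0_norm.
- by rewrite ler_norml h1 h2.
- by rewrite normrN gtr0_norm.
Qed.

Lemma cond_clip s r b : 0 < s ->
  ((s < r -> b = s) /\ (- s <= r <= s -> b = r) /\ (r < - s -> b = - s)) <-> b = clip s r.
Proof.
move=> s0; have [h1 h2 h3] := clipP s r s0; split.
- move=> [c1 [c2 c3]].
  case: (clip_cases s r s0) => [[h ->]|[h ->]|[h ->]]; [exact: c1|exact: c2|exact: c3].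
- move=> ->; split; [|split] => h; [exact: h1|exact: h2|exact: h3].
Qed.

Lemma absP t : (0 <= t /\ `|t| = t) \/ (t < 0 /\ `|t| = - t).
Proof.
have [h|h] := lerP 0 t; [left; split => //; exact: ger0_norm|right; split => //; exact: ltr0_norm].
Qed.

Lemma hub_lb s t b : 0 < s ->
  hub s t + (b - clip s t) ^+ 2 / 2 <= s * `|t - b| + b ^+ 2 / 2.
Proof.
move=> s0; rewrite /hub.
case: (clip_cases s t s0) => [[h ->]|[/andP[h1 h2] ->]|[h ->]];
  case: (absP (t - b)) => [[h' ->]|[h' ->]]; nra.
Qed.

Lemma hub_eq s t : 0 < s ->
  s * `|t - clip s t| + clip s t ^+ 2 / 2 = hub s t.
Proof.
move=> s0; rewrite /hub.
case: (clip_cases s t s0) => [[h ->]|[/andP[h1 h2] ->]|[h ->]];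
  match goal with |- context[`|?x|] => case: (absP x) => [[? ->]|[? ->]] end; lra.
Qed.

Lemma hub_dual s t : 0 < s ->
  s * `|t - clip s t| + clip s t ^+ 2 = clip s t * t.
Proof.
move=> s0.
case: (clip_cases s t s0) => [[h ->]|[/andP[h1 h2] ->]|[h ->]];
  match goal with |- context[`|?x|] => case: (absP x) => [[? ->]|[? ->]] end; nra.
Qed.

Lemma hub_ge s t : 0 < s -> s * `|t| - s ^+ 2 / 2 <= hub s t.
Proof.
move=> s0; rewrite /hub.
case: (clip_cases s t s0) => [[h ->]|[/andP[h1 h2] ->]|[h ->]];
  case: (absP t) => [[h' ->]|[h' ->]]; nra.
Qed.

Lemma hub_ge0 s t : 0 < s -> 0 <= hub s t.
Proof.
move=> s0; rewrite /hub.
case: (clip_cases s t s0) => [[h ->]|[/andP[h1 h2] ->]|[h ->]]; nra.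
Qed.

Lemma lag_pt s u r b : `|u| <= s ->
  - (u ^+ 2 / 2) <= s * `|r| + b ^+ 2 / 2 - u * b - u * r.
Proof.
move=> hu.
have h1 : u * r <= s * `|r|.
  by rewrite (le_trans (ler_norm _)) // normrM ler_wpM2r.
have h2 : 0 <= (b - u) ^+ 2 by exact: sqr_ge0.
nra.
Qed.

End Pt.
Arguments clip {R}. Arguments hub {R}. Arguments clipP {R}. Arguments clip_cases {R}. Arguments clip_norm {R}. Arguments cond_clip {R}. Arguments hub_lb {R}. Arguments hub_eq {R}. Arguments hub_dual {R}. Arguments hub_ge {R}. Arguments hub_ge0 {R}. Arguments lag_pt {R}.

Set Implicit Arguments. Unset Strict Implicit. Unset Printing Implicit Defensive.

Section Main.
Variables (R : realType) (n p : nat) (X : 'M[R]_(n,p)) (y : 'cV[R]_n) (s : R).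
Hypothesis s0 : 0 < s.

Local Notation rr g i := (y i 0 - (X *m g) i 0).
Local Notation psi := (psi X y s).

Lemma psiE g b : psi g b = \sum_i (s * `|rr g i - b i 0| + b i 0 ^+ 2 / 2).
Proof.
rewrite /Defs.psi /norm1 /sqnorm2 !mulr_sumr -big_split /=; apply eq_bigr => i _.
set Xg := X *m g; rewrite !mxE; lra.
Qed.

Lemma dotXd u d : dotv u (X *m d) = \sum_j (X^T *m u) j 0 * d j 0.
Proof.
have -> : dotv u (X *m d) = (u^T *m (X *m d)) 0 0.
  set Xd := X *m d; rewrite /dotv mxE; apply eq_bigr => i _.
  by rewrite [u^T 0 i]mxE.
rewrite mulmxA -(trmxK (u^T *m X)) trmx_mul trmxK mxE.
by apply eq_bigr => j _; rewrite mxE.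
Qed.

Lemma dot0 u g : X^T *m u = 0 -> dotv u (X *m g) = 0.
Proof. by move=> h; rewrite dotXd h big1 // => j _; rewrite mxE mul0r. Qed.

Lemma dotv0 (u : 'cV[R]_n) : dotv u 0 = 0.
Proof. by rewrite /dotv big1 // => i _; rewrite mxE mulr0. Qed.

Lemma lag_psi g b u : lagrangian X y s g b (y - X *m g - b) u = psi g b.
Proof. by rewrite /lagrangian subrr dotv0 addr0. Qed.

Lemma lagE g b r u : lagrangian X y s g b r u =
  \sum_i (s * `|r i 0| + b i 0 ^+ 2 / 2 + u i 0 * (y i 0 - b i 0 - r i 0))
  - dotv u (X *m g).
Proof.
rewrite /lagrangian /norm1 /sqnorm2 /dotv !mulr_sumr -!big_split /= -sumrB.
apply eq_bigr => i _; set Xg := X *m g; rewrite !mxE; lra.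
Qed.

Lemma dualE u : dual_obj y u = \sum_i (u i 0 * y i 0 - u i 0 ^+ 2 / 2).
Proof.
rewrite /dual_obj /dotv /sqnorm2 mulr_sumr -sumrB; apply eq_bigr => i _; lra.
Qed.

Lemma weak u g b r : in_sigmaPstar X s u -> dual_obj y u <= lagrangian X y s g b r u.
Proof.
move=> [hX hu]; rewrite dualE lagE dot0 // subr0; apply: ler_sum => i _.
have := lag_pt s (u i 0) (r i 0) (b i 0) (hu i); lra.
Qed.

Lemma attain u : lagrangian X y s 0 u 0 u = dual_obj y u.
Proof.
rewrite lagE dualE mulmx0 dotv0 subr0; apply eq_bigr => i _.
rewrite mxE normr0; lra.
Qed.

Lemma dual_eq gh bh : X^T *m bh = 0 -> (forall i, bh i 0 = clip s (rr gh i)) ->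
  psi gh bh = dual_obj y bh.
Proof.
move=> hX hb; rewrite psiE dualE.
have -> : \sum_i (bh i 0 * y i 0 - bh i 0 ^+ 2 / 2) =
   \sum_i (bh i 0 * rr gh i - bh i 0 ^+ 2 / 2) + dotv bh (X *m gh).
  rewrite /dotv -big_split /=; apply eq_bigr => i _; lra.
rewrite dot0 // addr0; apply eq_bigr => i _; rewrite hb.
have := hub_dual s (rr gh i) s0; lra.
Qed.

Lemma psi_ge_H g b : \sum_i hub s (rr g i) <= psi g b.
Proof.
rewrite psiE; apply: ler_sum => i _.
have := hub_lb s (rr g i) (b i 0) s0; have := sqr_ge0 (b i 0 - clip s (rr g i)); lra.
Qed.

Lemma psi_clip g : psi g (\col_i clip s (rr g i)) = \sum_i hub s (rr g i).
Proof.
rewrite psiE; apply eq_bigr => i _; rewrite mxE; exact: hub_eq s _ s0.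
Qed.

Lemma min_clip gh bh : (forall g b, psi gh bh <= psi g b) ->
  forall i, bh i 0 = clip s (rr gh i).
Proof.
move=> hmin.
have h := hmin gh (\col_i clip s (rr gh i)); rewrite psi_clip psiE in h.
pose q i := (bh i 0 - clip s (rr gh i)) ^+ 2 / 2.
have q0 i : 0 <= q i by rewrite /q; have := sqr_ge0 (bh i 0 - clip s (rr gh i)); lra.
have hs : \sum_i q i = 0.
  apply/eqP; rewrite eq_le sumr_ge0 // andbT.
  have : \sum_i q i <= \sum_i (s * `|rr gh i - bh i 0| + bh i 0 ^+ 2 / 2 - hub s (rr gh i)).
    apply: ler_sum => i _; have := hub_lb s (rr gh i) (bh i 0) s0; rewrite /q; lra.
  rewrite sumrB; lra.
move=> i; have := psumr_eq0P (fun i _ => q0 i) hs (i := i) isT.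
rewrite /q => hq.
have : (bh i 0 - clip s (rr gh i)) ^+ 2 = 0 by lra.
by move/eqP; rewrite sqrf_eq0 subr_eq0 => /eqP.
Qed.

Lemma sq_sum0 (m : nat) (v : 'cV[R]_m) : \sum_j v j 0 ^+ 2 = 0 -> v = 0.
Proof.
move=> h; apply/matrixP => j k; rewrite (ord1 k) mxE.
have := psumr_eq0P (fun j _ => sqr_ge0 (v j 0)) h (i := j) isT.
by move/eqP; rewrite sqrf_eq0 => /eqP.
Qed.

Lemma min_XT gh bh : (forall g b, psi gh bh <= psi g b) -> X^T *m bh = 0.
Proof.
move=> hmin.
set v := X^T *m bh; set w := X *m v.
set S := \sum_j v j 0 ^+ 2; set W := \sum_i w i 0 ^+ 2.
have S0 : 0 <= S by apply: sumr_ge0 => j _; exact: sqr_ge0.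
have W0 : 0 <= W by apply: sumr_ge0 => j _; exact: sqr_ge0.
have Sdot : \sum_i bh i 0 * w i 0 = S.
  by rewrite -/(dotv bh w) /w dotXd; apply eq_bigr => j _; rewrite -/v expr2.
have key t : 0 < t -> 2 * t * S <= t ^+ 2 * W.
  move=> t0; have h := hmin (gh + t *: v) (bh - t *: w).
  have E : psi (gh + t *: v) (bh - t *: w) - psi gh bh =
      \sum_i (t ^+ 2 / 2 * w i 0 ^+ 2 - t * (bh i 0 * w i 0)).
    rewrite !psiE -sumrB; apply eq_bigr => i _.
    rewrite mulmxDr -scalemxAr -/w.
    set Xgh := X *m gh.
    rewrite !mxE.
    set A := \sum_j X i j * gh j 0; set B := \sum_j X i j * v j 0.
    have -> : y i 0 - (A + t * B) - (bh i 0 - t * B) = y i 0 - A - bh i 0 by ring.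
    by field.
  have : 0 <= \sum_i (t ^+ 2 / 2 * w i 0 ^+ 2 - t * (bh i 0 * w i 0)) by rewrite -E; lra.
  rewrite sumrB -!mulr_sumr Sdot -/W; lra.
have : S <= 0.
  pose t := S / (W + 1).
  have [Sp|] := ltP 0 S; last by [].
  have t0 : 0 < t by rewrite /t divr_gt0 //; lra.
  have h := key t t0.
  have h2 : 2 * S <= t * W.
    rewrite -(@ler_pM2l _ t) //; rewrite expr2 in h; lra.
  have h3 : t * W <= S.
    have -> : S = t * (W + 1) by rewrite /t mulfVK //; lra.
    rewrite ler_pM2l //; lra.
  lra.
move=> hS; apply: sq_sum0; rewrite -/S; lra.
Qed.

Lemma pick_t (D M k : R) : 0 < k -> exists t, 0 < t /\ D - t * k < M.
Proof.
move=> k0; exists ((`|D| + `|M| + 1) / k); split.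
  by apply: divr_gt0 => //; have := normr_ge0 D; have := normr_ge0 M; lra.
rewrite mulfVK; last by rewrite gt_eqF.
have := ler_norm D; have := ler_norm (- M); rewrite normrN; lra.
Qed.

Lemma lag_unb u : ~ in_sigmaPstar X s u ->
  forall M, exists g b r, lagrangian X y s g b r u < M.
Proof.
move=> hn M; set D := \sum_i u i 0 * y i 0.
have [hX|hX] := eqVneq (X^T *m u) 0.
  case/boolP: [forall i, `|u i 0| <= s] => [/forallP h|/forallPn [i]].
    by exfalso; apply: hn; split.
  rewrite -ltNge => hi.
  set k := `|u i 0| * (`|u i 0| - s).
  have k0 : 0 < k by rewrite /k mulr_gt0 //; rewrite ?subr_gt0 //; apply: lt_trans hi.
  have k0' : True by [].
  have [t [t0 ht]] := pick_t D M k0.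
  exists 0, 0, (\col_j (if j == i then t * u i 0 else 0)).
  rewrite lagE dot0 // subr0.
  have -> : \sum_j (s * `|(\col_j0 (if j0 == i then t * u i 0 else 0)) j 0| + (0 : 'cV[R]_n) j 0 ^+ 2 / 2 +
       u j 0 * (y j 0 - (0 : 'cV[R]_n) j 0 - (\col_j0 (if j0 == i then t * u i 0 else 0)) j 0)) =
     D + \sum_j (if j == i then s * `|t * u i 0| - u i 0 * (t * u i 0) else 0).
    rewrite /D -big_split /=; apply eq_bigr => j _; rewrite !mxE.
    case: eqP => [->|_]; rewrite ?normr0; lra.
  rewrite -big_mkcond /= big_pred1_eq.
  rewrite normrM (gtr0_norm t0).
  suff : s * (t * `|u i 0|) - u i 0 * (t * u i 0) = - (t * k) by move=> ->; lra.
  have hu2 : u i 0 * u i 0 = `|u i 0| * `|u i 0|.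
    by rewrite -normrM -expr2 ger0_norm // sqr_ge0.
  transitivity (s * (t * `|u i 0|) - t * (u i 0 * u i 0)); first ring.
  rewrite hu2 /k; ring.
set v := X^T *m u; set S := \sum_j v j 0 ^+ 2.
have S0 : 0 < S.
  rewrite lt_def sumr_ge0 ?andbT; last by move=> j _; exact: sqr_ge0.
  apply/eqP => hS; move: hX; rewrite -/v; apply/negP; rewrite negbK; apply/eqP.
  exact: sq_sum0.
have [t [t0 ht]] := pick_t D M S0.
exists (t *: v), 0, 0.
rewrite lagE dotXd -/v.
have -> : \sum_j v j 0 * (t *: v) j 0 = t * S.
  rewrite /S mulr_sumr; apply eq_bigr => j _; rewrite [(t *: v) j 0]mxE expr2; ring.
have -> : \sum_i (s * `|(0 : 'cV[R]_n) i 0| + (0 : 'cV[R]_n) i 0 ^+ 2 / 2 +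
     u i 0 * (y i 0 - (0 : 'cV[R]_n) i 0 - (0 : 'cV[R]_n) i 0)) = D.
  by apply eq_bigr => i _; rewrite !mxE normr0; lra.
done.
Qed.

Definition H (g : 'cV[R]_p) := \sum_i hub s (rr g i).

Lemma psi_clipH g : psi g (\col_i clip s (rr g i)) = H g.
Proof. exact: psi_clip. Qed.

Lemma le_sum1 (m : nat) (F : 'I_m -> R) k : (forall i, 0 <= F i) -> F k <= \sum_i F i.
Proof.
move=> h; rewrite (bigD1 k) //= lerDl; apply: sumr_ge0 => i _; exact: h.
Qed.

Lemma coerc : \rank X = p -> exists Rad, 0 <= Rad /\
  forall (g : 'cV[R]_p) j, Rad < `|g j 0| -> H 0 < H g.
Proof.
move=> hr.
have [B hB] : exists B : 'M[R]_(p, n), B *m X = 1%:M.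
  by apply/row_fullP; rewrite /row_full hr.
set K := 1 + \sum_j \sum_i `|B j i|.
have KB j i : `|B j i| <= K.
  rewrite /K; apply: (le_trans _ (ler_wpDl ler01 (le_refl _))).
  apply: (le_trans (le_sum1 (F := fun i => `|B j i|) i (fun _ => normr_ge0 _))).
  apply: (le_sum1 (F := fun j => \sum_i `|B j i|) j) => j'.
  by apply: sumr_ge0 => i' _; exact: normr_ge0.
have K0 : 0 < K.
  rewrite /K; have : 0 <= \sum_j \sum_i `|B j i|.
    by apply: sumr_ge0 => j _; apply: sumr_ge0 => i _; exact: normr_ge0.
  lra.
set Y := \sum_i `|y i 0|.
have Y0 : 0 <= Y by apply: sumr_ge0 => i _; exact: normr_ge0.
set c := n%:R * (s ^+ 2 / 2).
have c0 : 0 <= c by rewrite /c mulr_ge0 // divr_ge0 // sqr_ge0.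
have H0 : 0 <= H 0 by apply: sumr_ge0 => i _; exact: hub_ge0.
exists (K * (H 0 + c + s * Y) / s); split.
  apply: divr_ge0; last exact: ltW.
  apply: mulr_ge0; first exact: ltW.
  by rewrite !addr_ge0 // mulr_ge0 // ltW.
move=> g j; apply: contraTT; rewrite -!leNgt => hle.
have hg : g = B *m (X *m g) by rewrite mulmxA hB mul1mx.
have h1 : `|g j 0| <= K * \sum_i `|(X *m g) i 0|.
  rewrite {1}hg mxE mulr_sumr; apply: (le_trans (ler_norm_sum _ _ _)).
  apply: ler_sum => i _; rewrite normrM; apply: ler_wpM2r => //; exact: normr_ge0.
have h2 : \sum_i `|(X *m g) i 0| <= \sum_i `|rr g i| + Y.
  rewrite /Y -big_split /=; apply: ler_sum => i _.
  have e : `|(X *m g) i 0| = `|y i 0 - rr g i| by congr (`|_|); ring.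
  rewrite e; apply: (le_trans (ler_normB _ _)); lra.
have h3 : s * \sum_i `|rr g i| - c <= H g.
  have -> : s * \sum_i `|rr g i| - c = \sum_i (s * `|rr g i| - s ^+ 2 / 2).
    by rewrite sumrB /c -mulr_sumr sumr_const card_ord mulr_natl.
  by apply: ler_sum => i _; exact: hub_ge.
have h4 : s * `|g j 0| <= K * (H 0 + c + s * Y).
  have : s * `|g j 0| <= s * (K * (\sum_i `|rr g i| + Y)).
    rewrite ler_pM2l //; apply: (le_trans h1); rewrite ler_pM2l //.
  move/le_trans; apply; rewrite mulrCA ler_pM2l //; lra.
rewrite ler_pdivlMr // mulrC //.
Qed.

Hypothesis exmin : forall (a : 'I_n -> 'I_p -> R) (c : 'I_n -> R) (Rad : R), 0 <= Rad ->
  exists v : 'rV[R]_p, (forall j, `|v ord0 j| <= Rad) /\ forall w : 'rV[R]_p, (forall j, `|w ord0 j| <= Rad) ->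
   \sum_(i < n) hub s (c i - \sum_(j < p) a i j * v ord0 j) <=
   \sum_(i < n) hub s (c i - \sum_(j < p) a i j * w ord0 j).

Lemma H_rV g : H g = \sum_i hub s (y i 0 - \sum_j X i j * g^T ord0 j).
Proof.
apply eq_bigr => i _; rewrite mxE; congr (hub s (_ - _)).
by apply eq_bigr => j _; rewrite mxE.
Qed.

Lemma exists_minH : \rank X = p -> exists gm, forall g, H gm <= H g.
Proof.
move=> hr; have [Rad [R0 hR]] := coerc hr.
have [v [vb vmin]] := exmin (fun i j => X i j) (fun i => y i 0) R0.
exists v^T => g.
have Hv : H v^T = \sum_i hub s (y i 0 - \sum_j X i j * v ord0 j).
  by rewrite H_rV trmxK.
case/boolP: [forall j, `|g j 0| <= Rad] => [/forallP hb|/forallPn [j]].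
  rewrite Hv H_rV; apply: vmin => j; rewrite mxE; exact: hb.
rewrite -ltNge => hj; apply: (le_trans _ (ltW (hR g j hj))).
rewrite Hv H_rV; apply: vmin => j'; rewrite !mxE normr0 //.
Qed.

End Main.

Module Ex.
Import boolp classical_sets topology normedtype derive.
Import Order.TTheory GRing.Theory Num.Theory.
Import numFieldNormedType.Exports.
Local Open Scope classical_set_scope.
Local Open Scope ring_scope.

Lemma exists_min_rV (R : realType) (p : nat) (F : 'rV[R]_p -> R) (Rad : R) :
  0 <= Rad -> continuous F ->
  exists c : 'rV[R]_p, (forall j, `|c ord0 j| <= Rad) /\
    forall v : 'rV[R]_p, (forall j, `|v ord0 j| <= Rad) -> F c <= F v.
Proof.
move=> R0 cF.
pose A := [set v : 'rV[R]_p | forall j, `[- Rad, Rad]%classic (v ord0 j)].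
have cA : compact A.
  apply: (@rV_compact _ _ (fun=> `[- Rad, Rad]%classic)) => _.
  exact: segment_compact.
have A0 : A !=set0.
  by exists 0 => j /=; rewrite mxE in_itv /= oppr_le0 R0.
have cFA : {within A, continuous F} by apply: continuous_subspaceT.
have [c cA' cmin] := EVT_min_rV A0 cA cFA.
have hA (v : 'rV[R]_p) : (forall j, `|v ord0 j| <= Rad) <-> v \in A.
  rewrite inE /A /=; split => h j; have := h j; by rewrite in_itv /= ler_norml.
exists c; split; first by apply/hA.
by move=> v /hA; exact: cmin.
Qed.

Lemma cont_sum (R : realType) (T : topologicalType) (n : nat) (f : 'I_n -> T -> R^o) :
  (forall i, continuous (f i)) -> continuous (fun v => \sum_(i < n) f i v).
Proof.
move=> cf x.
rewrite /continuous_at.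
have : forall s : seq 'I_n, {for x, continuous (fun v => \sum_(i <- s) f i v : R^o)}.
  elim => [|i s IH].
    rewrite (_ : (fun v => _) = (fun=> 0)); first exact: cvg_cst.
    by apply: boolp.funext => v; rewrite big_nil.
  rewrite (_ : (fun v => _) = (fun v => f i v + \sum_(j <- s) f j v : R^o)); last first.
    by apply: boolp.funext => v; rewrite big_cons.
  exact: (continuousD (cf i x) IH).
by move=> /(_ (index_enum 'I_n)).

Qed.

Lemma cont_minmax (R : realType) (s : R) :
  continuous (fun t : R^o => (Num.max (- s) (Num.min s t) * (t - Num.max (- s) (Num.min s t) / 2) : R^o)).
Proof.
pose cl := fun t : R^o => (Num.max (- s) (Num.min s t) : R^o).
have cc : continuous cl.
  move=> x; apply: (@continuous_max R R^o (fun=> - s) (fun t => Num.min s t)).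
    exact: cvg_cst.
  apply: (@continuous_min R R^o (fun=> s) id); first exact: cvg_cst.
  done.
move=> x.
have c2 : {for x, continuous (fun t : R^o => (t - cl t / 2 : R^o))}.
  apply: (@continuousB R R^o R^o id (fun t => cl t / 2)); first done.
  apply: (@continuousM R R^o cl (fun=> 2^-1)); first exact: cc.
  exact: cvg_cst.
exact: (@continuousM R R^o cl (fun t : R^o => (t - cl t / 2 : R^o)) x (cc x) c2).
Qed.

Lemma cont_lin (R : realType) (p : nat) (a : 'I_p -> R) (c : R) :
  continuous (fun v : 'rV[R]_p => (c - \sum_(j < p) a j * v ord0 j : R^o)).
Proof.
have cs : continuous (fun v : 'rV[R]_p => (\sum_(j < p) a j * v ord0 j : R^o)).
  apply: (@cont_sum R _ p (fun j (v : 'rV[R]_p) => (a j * v ord0 j : R^o))) => j y.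
  apply: (@continuousM R _ (fun=> a j) (fun v : 'rV[R]_p => v ord0 j)).
    exact: cst_continuous.
  exact: coord_continuous.
move=> x; apply: (@continuousB R R^o _ (fun=> c)).
  exact: cst_continuous.
exact: cs.
Qed.

Lemma cont_F (R : realType) (n p : nat) (h : R -> R) (a : 'I_n -> 'I_p -> R) (c : 'I_n -> R) :
  continuous (h : R^o -> R^o) ->
  continuous (fun v : 'rV[R]_p => (\sum_(i < n) h (c i - \sum_(j < p) a i j * v ord0 j) : R^o)).
Proof.
move=> ch.
apply: (@cont_sum R _ n (fun i (v : 'rV[R]_p) => (h (c i - \sum_(j < p) a i j * v ord0 j) : R^o))) => i x.
apply: continuous_comp; first exact: cont_lin.
exact: ch.
Qed.

Lemma exmin_all (R : realType) (n p : nat) (s : R) (a : 'I_n -> 'I_p -> R) (c : 'I_n -> R) (Rad : R) :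
  0 <= Rad ->
  exists v : 'rV[R]_p, (forall j, `|v ord0 j| <= Rad) /\ forall w : 'rV[R]_p, (forall j, `|w ord0 j| <= Rad) ->
   \sum_(i < n) hub s (c i - \sum_(j < p) a i j * v ord0 j) <=
   \sum_(i < n) hub s (c i - \sum_(j < p) a i j * w ord0 j).
Proof.
move=> R0.
apply: (@exists_min_rV R p (fun v => \sum_(i < n) hub s (c i - \sum_(j < p) a i j * v ord0 j)) Rad R0).
apply: (@cont_F R n p (hub s) a c).
exact: cont_minmax.
Qed.

End Ex.

Unset Implicit Arguments.

Theorem lemma4p3 (R : realType) (n p : nat) (X : 'M[R]_(n, p))
  (y : 'cV[R]_n) (sigma : R) :
  (p < n)%N -> \rank X = p -> 0 < sigma ->
  (* (i) characterization of minimizers *)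
  (forall (gh : 'cV[R]_p) (bh : 'cV[R]_n),
     (forall g b, psi X y sigma gh bh <= psi X y sigma g b) <->
     (X^T *m bh = 0 /\
      forall i : 'I_n,
        let ri := y i 0 - (X *m gh) i 0 in
        (sigma < ri -> bh i 0 = sigma) /\
        (- sigma <= ri <= sigma -> bh i 0 = ri) /\
        (ri < - sigma -> bh i 0 = - sigma))) /\
  (* (i) in particular ||bh||_oo <= sigma for any minimizer *)
  (forall (gh : 'cV[R]_p) (bh : 'cV[R]_n),
     (forall g b, psi X y sigma gh bh <= psi X y sigma g b) ->
     forall i : 'I_n, `|bh i 0| <= sigma) /\
  (* (ii) the Lagrangian dual function is u^T y - 1/2||u||^2 on sigma P^*
     and -oo outside *)
  (forall u : 'cV[R]_n,
     (in_sigmaPstar X sigma u ->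
        (forall g b r, dual_obj y u <= lagrangian X y sigma g b r u) /\
        exists g b r, lagrangian X y sigma g b r u = dual_obj y u) /\
     (~ in_sigmaPstar X sigma u ->
        forall M : R, exists g b r, lagrangian X y sigma g b r u < M)) /\
  (* (ii) strong duality: min psi = max over sigma P^* of the dual objective,
     both attained *)
  (exists (gh : 'cV[R]_p) (bh : 'cV[R]_n) (uh : 'cV[R]_n),
     (forall g b, psi X y sigma gh bh <= psi X y sigma g b) /\
     in_sigmaPstar X sigma uh /\
     (forall u, in_sigmaPstar X sigma u -> dual_obj y u <= dual_obj y uh) /\
     psi X y sigma gh bh = dual_obj y uh).
Proof.
move=> _ hr s0.
have char : forall (gh : 'cV[R]_p) (bh : 'cV[R]_n),
   (forall g b, psi X y sigma gh bh <= psi X y sigma g b) <->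
   (X^T *m bh = 0 /\
      forall i : 'I_n,
        let ri := y i 0 - (X *m gh) i 0 in
        (sigma < ri -> bh i 0 = sigma) /\
        (- sigma <= ri <= sigma -> bh i 0 = ri) /\
        (ri < - sigma -> bh i 0 = - sigma)).
  move=> gh bh; split.
  - move=> hmin; split; first exact: min_XT hmin.
    move=> i; cbv zeta; apply/(cond_clip _ _ _ s0); exact: (min_clip s0 hmin i).
  - move=> [hX hc] g b.
    have hb : forall i, bh i 0 = clip sigma (y i 0 - (X *m gh) i 0).
      by move=> i; apply/(cond_clip _ _ _ s0); have := hc i; cbv zeta.
    rewrite (dual_eq s0 hX hb) -(lag_psi X y sigma g b bh); apply: weak.
    by split => // i; rewrite hb; exact: clip_norm.
have bnd : forall (gh : 'cV[R]_p) (bh : 'cV[R]_n),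
     (forall g b, psi X y sigma gh bh <= psi X y sigma g b) ->
     forall i : 'I_n, `|bh i 0| <= sigma.
  by move=> gh bh hmin i; rewrite (min_clip s0 hmin i); exact: clip_norm.
split => //; split => //; split.
  move=> u; split.
    move=> hu; split; first by move=> g b r; exact: weak.
    by exists 0, u, 0; exact: attain.
  exact: (lag_unb y s0).
have [gm hgm] := exists_minH y s0 (@Ex.exmin_all R n p sigma) hr.
set bh := \col_i clip sigma (y i 0 - (X *m gm) i 0).
have hmin : forall g b, psi X y sigma gm bh <= psi X y sigma g b.
  move=> g b; rewrite /bh (psi_clipH X y s0); apply: (le_trans (hgm g)); exact: (psi_ge_H X y s0 g b).
have hX := min_XT hmin.
have hb : forall i, bh i 0 = clip sigma (y i 0 - (X *m gm) i 0) by move=> i; rewrite mxE.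
have hin : in_sigmaPstar X sigma bh by split => // i; rewrite hb; exact: clip_norm.
exists gm, bh, bh; split => //; split => //; split.
  by move=> u hu; rewrite -(dual_eq s0 hX hb) -(lag_psi X y sigma gm bh u); exact: weak.
exact: dual_eq.
Qed.
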